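(* Let $n_1,n_2\ge 1$ be integers, $n=n_1+n_2$, and consider a uniformly random arrangement of $n_1$ symbols $x$ and $n_2$ symbols $y$ (all $\binom{n}{n_1}$ arrangements equally likely). Let $R_1$ and $R_2$ be the numbers of runs of $x$'s and of $y$'s, respectively, $R_m=\min(R_1,R_2)$ and $R_M=\max(R_1,R_2)$. Then $$\mathrm{Cov}(R_m,R_M)=\frac{n_1n_2(n_1-1)(n_2-1)}{n(n-1)^2}.$$
   Context: A run is a maximal block of consecutive identical symbols in the arrangement. *)

(* Defs.v *)
From HB Require Import structures.
From mathcomp Require Import all_boot all_order all_algebra.
Set Implicit Arguments. Unset Strict Implicit. Unset Printing Implicit Defensive.
Import Order.TTheory GRing.Theory Num.Theory.

(* An arrangement of n symbols: a tuple of booleans, true = x, false = y. *)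

(* Number of runs of symbol b in s: positions i holding b that either start
   the sequence or are preceded by a different symbol (start of a maximal block). *)
Definition runs (b : bool) (s : seq bool) : nat :=
  \sum_(i < size s | (nth b s i == b) && ((val i == 0) || (nth b s (val i).-1 != b))) 1.

Definition arrangements (n1 n2 : nat) : {set (n1 + n2).-tuple bool} :=
  [set t : (n1 + n2).-tuple bool | count id t == n1].

Local Open Scope ring_scope.

Definition uexp (T : finType) (A : {set T}) (f : T -> rat) : rat :=
  (\sum_(t in A) f t) / #|A|%:R.

Definition ucov (T : finType) (A : {set T}) (f g : T -> rat) : rat :=
  uexp A (fun t => f t * g t) - uexp A f * uexp A g.

Definition Rmin (n : nat) (t : n.-tuple bool) : rat :=
  (minn (runs true t) (runs false t))%:R.
Definition Rmax (n : nat) (t : n.-tuple bool) : rat :=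
  (maxn (runs true t) (runs false t))%:R.

(* Main.v *)
Require Import Defs.
From mathcomp Require Import all_boot all_order all_algebra.
From mathcomp Require Import ring lra zify.
Import Order.TTheory GRing.Theory Num.Theory.
Set Implicit Arguments. Unset Strict Implicit. Unset Printing Implicit Defensive.

Fixpoint arr (n k : nat) : seq (seq bool) :=
  match n with
  | 0 => if k == 0 then [:: [::]] else [::]
  | n'.+1 => (if k is k'.+1 then map (cons true) (arr n' k') else [::])
             ++ map (cons false) (arr n' k)
  end.

Lemma cons_inj (b : bool) : injective (cons b).
Proof. by move=> x y [].  Qed.

Lemma mem_arr n k s : (s \in arr n k) = (size s == n) && (count id s == k).
Proof.
elim: n k s => [|n IH] k s /=.
  by case: k => [|k] /=; case: s.
rewrite mem_cat; case: s => [|c s] /=.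
  apply/negbTE/negP; case/orP; last by case/mapP.
  by case: k => //= k; case/mapP.
case: c => /=.
  have -> : (true :: s \in [seq false :: i | i <- arr n k]) = false.
    by apply/negbTE/negP => /mapP [x _].
  rewrite orbF; case: k => [|k] /=; first by rewrite andbF.
  by rewrite (mem_map (@cons_inj true)) IH eqSS add1n eqSS.
rewrite (mem_map (@cons_inj false)).
have -> : (false :: s \in (if k is k'.+1 then [seq true :: i | i <- arr n k'] else [::])) = false.
  by case: k => // k; apply/negbTE/negP => /mapP [x _].
by rewrite IH eqSS add0n.
Qed.

Lemma uniq_arr n k : uniq (arr n k).
Proof.
elim: n k => [|n IH] k /=; first by case: k.
rewrite cat_uniq map_inj_uniq ?IH; last by move=> a b [].
rewrite andbT; apply/andP; split.
  by case: k => // k; rewrite map_inj_uniq ?IH //; move=> a b [].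
apply/hasPn => x /mapP [y _ ->]; case: k => // k; by apply/negP => /mapP [z _].
Qed.

Lemma size_arr n k : size (arr n k) = 'C(n, k).
Proof.
elim: n k => [|n IH] k /=; first by case: k.
rewrite size_cat !size_map; case: k => [|k]; first by rewrite IH !bin0.
by rewrite size_map !IH binS addnC.
Qed.

Lemma arr_gt n k : n < k -> arr n k = [::].
Proof. by move=> h; apply/size0nil; rewrite size_arr bin_small. Qed.

Lemma arr0 n : arr n 0 = [:: nseq n false].
Proof. by elim: n => //= n ->. Qed.

Lemma arrn n : arr n n = [:: nseq n true].
Proof. by elim: n => //= n ->; rewrite arr_gt. Qed.

Definition A n1 n2 := arr (n1 + n2) n1.

Local Open Scope ring_scope.

Lemma A_split (f : seq bool -> rat) a b : (0 < a + b)%N ->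
  \sum_(s <- A a b) f s =
  (if a is a'.+1 then \sum_(s <- A a' b) f (true :: s) else 0) +
  (if b is b'.+1 then \sum_(s <- A a b') f (false :: s) else 0).
Proof.
rewrite /A; case: a => [|a]; case: b => [|b] // _.
- by rewrite add0n [arr _ 0]/= big_map add0r.
- by rewrite !addn0 [arr _ _]/= (arr_gt (ltnSn a)) cats0 big_map addr0.
- rewrite {1}addSn [arr (_.+1) _]/= big_cat !big_map addSnnS.
  by [].
Qed.

Local Close Scope ring_scope.

Fixpoint rr (b p : bool) (s : seq bool) : nat :=
  if s is d :: s' then ((d == b) && (p != b)) + rr b d s' else 0.

Fixpoint ch (p : bool) (s : seq bool) : nat :=
  if s is d :: s' then (d != p) + ch d s' else 0.

Definition chg (s : seq bool) := if s is c :: s' then ch c s' else 0.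
Definition hdne (c : bool) (s : seq bool) := if s is d :: _ then d != c else false.
Definition dd (s : seq bool) := if s is c :: s' then last c s' == c else false.

Lemma rr_sum b c s :
  \sum_(i < size s) (if (nth b s i == b) && (nth b (c :: s) i != b) then 1 else 0) = rr b c s.
Proof.
elim: s c => [|d s IH] c /=; first by rewrite big_ord0.
by rewrite big_ord_recl /= IH.
Qed.

Lemma runs_cons b c s : runs b (c :: s) = (c == b) + rr b c s.
Proof.
rewrite /runs big_mkcond big_ord_recl /= -(rr_sum b c s).
by rewrite andbT; case: (c == b).
Qed.

Lemma rr_ch p s : rr true p s + rr false p s = ch p s.
Proof. by elim: s p => [|d s IH] p //=; rewrite -IH; case: d; case: p => /=; lia. Qed.

Lemma rr_last b p s : rr b p s + (p == b) = rr (~~ b) p s + (last p s == b).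
Proof.
elim: s p => [|d s IH] p /=; first by rewrite addnC.
have := IH d; clear IH; case: b; case: d; case: p => /=; lia.
Qed.

Lemma chg_cons c s : chg (c :: s) = chg s + hdne c s.
Proof. by case: s => [|d s] //=; rewrite addnC. Qed.

Lemma runs_minmax c s :
  let m := minn (runs true (c :: s)) (runs false (c :: s)) in
  let M := maxn (runs true (c :: s)) (runs false (c :: s)) in
  (m * 2 + dd (c :: s) = (chg (c :: s)).+1 /\ M * 2 = (chg (c :: s)).+1 + dd (c :: s))%N.
Proof.
rewrite /= !runs_cons.
have h1 := rr_last c c s; have h2 := rr_ch c s.
case: c h1 h2 => /=; rewrite ?eqxx /=; rewrite /minn /maxn; case: ltnP; lia.
Qed.
Local Open Scope ring_scope.

Definition Nr a b : rat := ('C(a + b, a))%:R.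

Lemma sum1 a b : \sum_(s <- A a b) (1 : rat) = Nr a b.
Proof. by rewrite -[1]/(1%:R) -natr_sum sum1_size /A size_arr. Qed.

Lemma BL x y : (x.+1 + y)%:R * Nr x y = x.+1%:R * Nr x.+1 y.
Proof.
rewrite /Nr -!natrM; congr (_%:R).
by have := mul_bin_diag (x.+1 + y) x; rewrite addSn /= -addSn.
Qed.

Lemma BR x y : (x + y.+1)%:R * Nr x y = y.+1%:R * Nr x y.+1.
Proof.
rewrite /Nr -!natrM; congr (_%:R).
have := mul_bin_down (x + y.+1) x; rewrite addnS /= => ->.
by rewrite -addnS addKn.
Qed.

Lemma A0b b : A 0 b = [:: nseq b false].
Proof. by rewrite /A add0n arr0. Qed.
Lemma Aa0 a : A a 0 = [:: nseq a true].
Proof. by rewrite /A addn0 arrn. Qed.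

Lemma ch_nseq c n : ch c (nseq n c) = 0%N.
Proof. by elim: n => //= n ->; rewrite eqxx. Qed.
Lemma chg_nseq c n : chg (nseq n c) = 0%N.
Proof. by case: n => //= n; rewrite ch_nseq. Qed.

Lemma HT a b : \sum_(s <- A a b) ((hdne true s)%:R : rat) = if b is b'.+1 then Nr a b' else 0.
Proof.
case: (posnP (a + b)) => [/eqP|h].
  by rewrite addn_eq0 => /andP [/eqP -> /eqP ->]; rewrite A0b big_seq1.
rewrite A_split //; case: a {h} => [|a]; case: b => [|b]; rewrite ?add0r ?addr0 //.
- by rewrite -sum1; apply: eq_bigr.
- by rewrite big1.
- by rewrite big1 // add0r -sum1; apply: eq_bigr.
Qed.

Lemma HF a b : \sum_(s <- A a b) ((hdne false s)%:R : rat) = if a is a'.+1 then Nr a' b else 0.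
Proof.
case: (posnP (a + b)) => [/eqP|h].
  by rewrite addn_eq0 => /andP [/eqP -> /eqP ->]; rewrite A0b big_seq1.
rewrite A_split //; case: a {h} => [|a]; case: b => [|b]; rewrite ?add0r ?addr0 //.
- by rewrite big1.
- by rewrite -sum1; apply: eq_bigr.
- by rewrite [X in _ + X]big1 // addr0 -sum1; apply: eq_bigr.
Qed.

Lemma solvel (c x y : rat) : c != 0 -> c * x = y -> x = y / c.
Proof. by move=> h <-; rewrite [c * x]mulrC mulfK. Qed.

Definition SK a b : rat := \sum_(s <- A a b) (chg s)%:R.
Definition SK2 a b : rat := \sum_(s <- A a b) (chg s)%:R ^+ 2.

Lemma SK_cons c a b : \sum_(s <- A a b) (chg (c :: s))%:R =
   SK a b + \sum_(s <- A a b) ((hdne c s)%:R : rat).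
Proof. by rewrite /SK -big_split; apply: eq_bigr => s _; rewrite chg_cons natrD. Qed.

Lemma SK0b b : SK 0 b = 0.
Proof. by rewrite /SK A0b big_seq1 chg_nseq. Qed.
Lemma SKa0 a : SK a 0 = 0.
Proof. by rewrite /SK Aa0 big_seq1 chg_nseq. Qed.

Lemma SK_closed a b : (a + b)%:R * SK a b = 2 * a%:R * b%:R * Nr a b.
Proof.
suff: forall n a b, (a + b <= n)%N -> (a + b)%:R * SK a b = 2 * a%:R * b%:R * Nr a b.
  by apply.
clear a b.
elim=> [|n IH] [|a] [|b] hab; rewrite ?SK0b ?SKa0 ?mulr0 ?mul0r ?mulr0 //.
rewrite /SK A_split // !SK_cons HT HF -/(SK _ _).
have IH1 := IH a b.+1 ltac:(lia). have IH2 := IH a.+1 b ltac:(lia).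
have E1 : SK a b.+1 = 2 * a%:R * b.+1%:R * Nr a b.+1 / (a + b.+1)%:R.
  by rewrite -IH1 [_ * SK _ _]mulrC mulfK // pnatr_eq0; lia.
have E2 : SK a.+1 b = 2 * a.+1%:R * b%:R * Nr a.+1 b / (a.+1 + b)%:R.
  by rewrite -IH2 [_ * SK _ _]mulrC mulfK // pnatr_eq0; lia.
have B1 := BL a b.+1. have B2 := BR a.+1 b. have B3 := BL a b.
rewrite E1 E2.
rewrite (solvel _ B3) ?pnatr_eq0 // (solvel _ B2) ?pnatr_eq0 // (solvel _ B1) ?pnatr_eq0 //.
have ha : 0 <= (a%:R : rat) := ler0n _ _. have hb : 0 <= (b%:R : rat) := ler0n _ _.
rewrite -!natr1 !natrD; field.
by apply/andP; split; apply: lt0r_neq0; lra.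
Qed.

Lemma HF_closed a b : (a + b)%:R * \sum_(s <- A a b) ((hdne false s)%:R : rat) = a%:R * Nr a b.
Proof. by rewrite HF; case: a => [|a]; rewrite ?mulr0 ?mul0r // BL. Qed.
Lemma HT_closed a b : (a + b)%:R * \sum_(s <- A a b) ((hdne true s)%:R : rat) = b%:R * Nr a b.
Proof. by rewrite HT; case: b => [|b]; rewrite ?mulr0 ?mul0r // BR. Qed.

Definition J c a b : rat := \sum_(s <- A a b) (chg s)%:R * (hdne c s)%:R.

Lemma JT a b : J true a b.+1 = SK a b + \sum_(s <- A a b) ((hdne false s)%:R : rat).
Proof.
rewrite /J (@A_split _ a b.+1) ?addnS //; case: a => [|a].
  by rewrite add0r -(SK_cons false); apply: eq_bigr => s _ /=; rewrite mulr1.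
rewrite big1 ?add0r; last by move=> s _ /=; rewrite mulr0.
by rewrite -(SK_cons false); apply: eq_bigr => s _ /=; rewrite mulr1.
Qed.

Lemma JF a b : J false a.+1 b = SK a b + \sum_(s <- A a b) ((hdne true s)%:R : rat).
Proof.
rewrite /J (@A_split _ a.+1 b) //; case: b => [|b].
  by rewrite addr0 -(SK_cons true); apply: eq_bigr => s _ /=; rewrite mulr1.
rewrite [X in _ + X]big1 ?addr0; last by move=> s _ /=; rewrite mulr0.
by rewrite -(SK_cons true); apply: eq_bigr => s _ /=; rewrite mulr1.
Qed.

Lemma SK2_cons c a b : \sum_(s <- A a b) (chg (c :: s))%:R ^+ 2 =
   SK2 a b + 2 * J c a b + \sum_(s <- A a b) ((hdne c s)%:R : rat).
Proof.
rewrite /SK2 /J mulr_sumr -!big_split; apply: eq_bigr => s _.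
by rewrite chg_cons natrD; case: (hdne c s) => /=; ring.
Qed.

Lemma SK20b b : SK2 0 b = 0.
Proof. by rewrite /SK2 A0b big_seq1 chg_nseq expr0n. Qed.
Lemma SK2a0 a : SK2 a 0 = 0.
Proof. by rewrite /SK2 Aa0 big_seq1 chg_nseq expr0n. Qed.

Lemma natr_neq0 (n : nat) : (0 < n)%N -> (n%:R : rat) != 0.
Proof. by rewrite pnatr_eq0 -lt0n. Qed.

Lemma SK2_closed a b :
  ((a + b) * (a + b).-1)%:R * SK2 a b = 2 * a%:R * b%:R * (2 * a%:R * b%:R - 1) * Nr a b.
Proof.
suff: forall n a b, (a + b <= n)%N -> ((a + b) * (a + b).-1)%:R * SK2 a b = 2 * a%:R * b%:R * (2 * a%:R * b%:R - 1) * Nr a b.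
  by apply.
clear a b.
elim=> [|n IH] [|a] [|b] hab; rewrite ?SK20b ?SK2a0 ?mulr0 ?mul0r ?mulr0 //.
rewrite /SK2 (@A_split _ a.+1 b.+1) // !SK2_cons JT JF (HT a b.+1) (HF a.+1 b) -/(SK2 _ _).
case: (posnP (a + b)) => [/eqP|hab0].
  rewrite addn_eq0 => /andP [/eqP -> /eqP ->].
  rewrite SK20b SK2a0 HT HF /SK A0b big_seq1 /Nr /=.
  rewrite !bin0; have -> : 'C(1 + 1, 1) = 2%N by [].
  ring.
have IH1 := IH a b.+1 ltac:(lia). have IH2 := IH a.+1 b ltac:(lia).
have IH3 := SK_closed a b. have H1 := HF_closed a b. have H2 := HT_closed a b.
have B1 := BL a b.+1. have B2 := BR a.+1 b. have B3 := BL a b.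
rewrite (solvel _ IH1) ?natr_neq0 ?muln_gt0 ?addnS //=.
rewrite (solvel _ IH2) ?natr_neq0 ?muln_gt0 ?addSn //=.
rewrite (solvel _ H1) ?natr_neq0 // (solvel _ H2) ?natr_neq0 // (solvel _ IH3) ?natr_neq0 //.
rewrite (solvel _ B3) ?natr_neq0 // (solvel _ B2) ?natr_neq0 // (solvel _ B1) ?natr_neq0 //.
have ha : 0 <= (a%:R : rat) := ler0n _ _. have hb : 0 <= (b%:R : rat) := ler0n _ _.
have h1 : 1 <= (a%:R : rat) + b%:R by rewrite -natrD ler1n.
rewrite !natrM !natrD -!natr1 !natrD; field.
by apply/and3P; split; apply: lt0r_neq0; lra.
Qed.
Local Open Scope ring_scope.

Definition Lq c a b : rat := \sum_(s <- A a b) ((last c s : nat)%:R).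

Lemma last_nseq (c d : bool) n : last c (nseq n d) = if n is 0 then c else d.
Proof. by elim: n c => //= n IH c; rewrite IH; case: n {IH}. Qed.

Lemma Lq_closed c a b : (a + b)%:R * Lq c a b = a%:R * Nr a b.
Proof.
suff: forall n c a b, (a + b <= n)%N -> (a + b)%:R * Lq c a b = a%:R * Nr a b.
  by apply.
clear c a b.
elim=> [|n IH] c a b hab.
  have [-> ->] : a = 0%N /\ b = 0%N by lia.
  by rewrite mul0r.
case: a hab => [|a]; case: b => [|b] hab.
- by rewrite mul0r.
- by rewrite /Lq A0b big_seq1 last_nseq !mul0r mulr0.
- by rewrite /Lq Aa0 big_seq1 last_nseq /Nr addn0 binn mulr1.
rewrite /Lq (@A_split _ a.+1 b.+1) //= -/(Lq _ _ _) -/(Lq _ _ _).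
have IH1 := IH true a b.+1 ltac:(lia). have IH2 := IH false a.+1 b ltac:(lia).
have B1 := BL a b.+1. have B2 := BR a.+1 b.
rewrite (solvel _ IH1) ?natr_neq0 ?addnS // (solvel _ IH2) ?natr_neq0 ?addSn //.
rewrite (solvel _ B2) ?natr_neq0 // (solvel _ B1) ?natr_neq0 //.
have ha : 0 <= (a%:R : rat) := ler0n _ _. have hb : 0 <= (b%:R : rat) := ler0n _ _.
rewrite !natrD -!natr1 !natrD; field.
by apply/andP; split; apply: lt0r_neq0; lra.
Qed.

Definition SD a b : rat := \sum_(s <- A a b) ((dd s : nat)%:R).

Lemma SD_eq a b : SD a.+1 b.+1 = Lq true a b.+1 + (Nr a.+1 b - Lq false a.+1 b).
Proof.
rewrite /SD (@A_split _ a.+1 b.+1) //; congr (_ + _).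
  by apply: eq_bigr => s _ /=; case: (last true s).
rewrite -sum1 /Lq -sumrB; apply: eq_bigr => s _ /=.
by case: (last false s).
Qed.
Local Open Scope ring_scope.

Lemma sum_arr (G : seq bool -> rat) n1 n2 :
  \sum_(t in arrangements n1 n2) G (tval t) = \sum_(u <- A n1 n2) G u.
Proof.
rewrite -big_enum -(big_map (@tval (n1 + n2) bool) xpredT).
apply: perm_big; apply: uniq_perm.
- by rewrite map_inj_uniq ?enum_uniq //; apply: val_inj.
- exact: uniq_arr.
move=> u; rewrite mem_arr; apply/mapP/idP.
  case=> t; rewrite mem_enum inE => /eqP hc ->; by rewrite size_tuple hc !eqxx.
case/andP => /eqP hs hc; exists (Tuple (introT eqP hs)) => //.
by rewrite mem_enum inE.
Qed.

Lemma card_arr n1 n2 : (#|arrangements n1 n2|%:R : rat) = Nr n1 n2.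
Proof.
by rewrite -sum1 -(sum_arr (fun _ => 1)) sumr_const.
Qed.

Lemma pt a b u : u \in A a.+1 b.+1 ->
  (minn (runs true u) (runs false u))%:R = ((chg u)%:R + 1 - (dd u)%:R) / 2 :> rat /\
  (maxn (runs true u) (runs false u))%:R = ((chg u)%:R + 1 + (dd u)%:R) / 2 :> rat.
Proof.
rewrite /A mem_arr => /andP [hs _].
case: u hs => [|c s] // _.
have [e1 e2] := runs_minmax c s.
move: e1 e2; set m := minn _ _; set M := maxn _ _ => e1 e2.
split.
  have : (m * 2 + dd (c :: s))%:R = ((chg (c :: s)).+1)%:R :> rat by rewrite e1.
  by rewrite natrD natrM => hh; rewrite natr1 -hh; field.
have : (M * 2)%:R = ((chg (c :: s)).+1 + dd (c :: s))%:R :> rat by rewrite e2.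
rewrite natrM natrD => hh; rewrite natr1 -hh; by field.
Qed.

Theorem theorem3 (n1 n2 : nat) (h1 : (1 <= n1)%N) (h2 : (1 <= n2)%N) :
  ucov (arrangements n1 n2) (@Rmin (n1 + n2)) (@Rmax (n1 + n2)) =
  (n1 * n2 * (n1 - 1) * (n2 - 1))%:R / ((n1 + n2) * (n1 + n2 - 1) ^ 2)%:R.
Proof.
case: n1 h1 => [|a] // _; case: n2 h2 => [|b] // _.
rewrite /ucov /uexp card_arr /Rmin /Rmax.
rewrite (sum_arr (fun u => (minn (runs true u) (runs false u))%:R * (maxn (runs true u) (runs false u))%:R)).
rewrite (sum_arr (fun u => (minn (runs true u) (runs false u))%:R)).
rewrite (sum_arr (fun u => (maxn (runs true u) (runs false u))%:R)).
have E1 : \sum_(u <- A a.+1 b.+1) ((minn (runs true u) (runs false u))%:R : rat) =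
    (SK a.+1 b.+1 + Nr a.+1 b.+1 - SD a.+1 b.+1) / 2.
  rewrite (eq_big_seq (fun u => ((chg u)%:R + 1 - (dd u)%:R) / 2)); last by move=> u /pt [].
  by rewrite -mulr_suml sumrB big_split sum1.
have E2 : \sum_(u <- A a.+1 b.+1) ((maxn (runs true u) (runs false u))%:R : rat) =
    (SK a.+1 b.+1 + Nr a.+1 b.+1 + SD a.+1 b.+1) / 2.
  rewrite (eq_big_seq (fun u => ((chg u)%:R + 1 + (dd u)%:R) / 2)); last by move=> u /pt [].
  by rewrite -mulr_suml !big_split sum1.
have E3 : \sum_(u <- A a.+1 b.+1) ((minn (runs true u) (runs false u))%:R *
       (maxn (runs true u) (runs false u))%:R : rat) =
    (SK2 a.+1 b.+1 + 2 * SK a.+1 b.+1 + Nr a.+1 b.+1 - SD a.+1 b.+1) / 4.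
  rewrite (eq_big_seq (fun u => ((chg u)%:R ^+ 2 + 2 * (chg u)%:R + 1 - (dd u)%:R) / 4)); last first.
    by move=> u /pt [-> ->]; case: (dd u) => /=; field.
  by rewrite -mulr_suml sumrB !big_split sum1 -mulr_sumr.
rewrite E3 E1 E2 SD_eq.
have L1 := Lq_closed true a b.+1. have L2 := Lq_closed false a.+1 b.
have S1 := SK_closed a.+1 b.+1. have S2 := SK2_closed a.+1 b.+1.
have B1 := BL a b.+1. have B2 := BR a.+1 b.
have nzN : Nr a.+1 b.+1 != 0 by rewrite /Nr natr_neq0 // bin_gt0 leq_addr.
rewrite (solvel _ L1) ?natr_neq0 ?addnS // (solvel _ L2) ?natr_neq0 ?addSn //.
rewrite (solvel _ S1) ?natr_neq0 ?addnS // (solvel _ S2) ?natr_neq0 ?muln_gt0 ?addnS //=.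
rewrite (solvel _ B2) ?natr_neq0 // (solvel _ B1) ?natr_neq0 //.
rewrite !subn1 /= addSn addnS /=.
have ha : 0 <= (a%:R : rat) := ler0n _ _. have hb : 0 <= (b%:R : rat) := ler0n _ _.
move: nzN; set N := Nr a.+1 b.+1 => nzN.
rewrite !natrM -!natr1 ?natrD -?natr1; field.
apply/and3P; split; [apply: lt0r_neq0; lra | apply: lt0r_neq0; lra | exact: nzN].
Qed.
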